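(* Let $F'_Y\le F_Y$ and $F_Z$ be distribution functions, $K=F_Y+F_Z-F_YF_Z$, $K'=F'_Y+F_Z-F'_YF_Z$, and let $\chi'$ and $\chi$ be the canonical maxmin generators of $(F'_Y,F_Z)$ and $(F_Y,F_Z)$ respectively. Then $\chi'\le\chi$ pointwise on $[0,1]$.
   Context: A distribution function is a non-decreasing map $F:\mathbb R\to[0,1]$ (no right-continuity assumed) with limits $0$ at $-\infty$ and $1$ at $+\infty$; $f(y\pm)$ are one-sided limits. The canonical maxmin generator $\chi$ of $(F_Y,F_Z)$, with $K=F_Y+F_Z-F_YF_Z$: $\chi(0)=0$, $\chi(1)=1$, and for $w\in(0,1)$ choose $y_0$ with $K(y_0-)\le w\le K(y_0+)$, let $w_-=K(y_0-)$, $w_l=F_Y(y_0-)+F_Z(y_0)-F_Y(y_0-)F_Z(y_0)$, $w_u=F_Y(y_0+)+F_Z(y_0)-F_Y(y_0+)F_Z(y_0)$, $w_+=K(y_0+)$, and $\chi(w)=F_Y(y_0-)$ on $[w_-,w_l]$, $\chi(w)=\frac{w-F_Z(y_0)}{1-F_Z(y_0)}$ on $[w_l,w_u]$, $\chi(w)=F_Y(y_0+)$ on $[w_u,w_+]$. *)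

(* Defs.v *)
From HB Require Import structures.
From mathcomp Require Import all_boot all_order all_algebra.
From mathcomp Require Import all_classical all_reals all_analysis.
Set Implicit Arguments. Unset Strict Implicit. Unset Printing Implicit Defensive.
Import Order.TTheory GRing.Theory Num.Theory.
Import numFieldNormedType.Exports.
Local Open Scope ring_scope.
Local Open Scope classical_set_scope.

(* Distribution function: non-decreasing, values in [0,1], limits 0 at -oo
   and 1 at +oo.  No right-continuity assumed. *)
Definition distribution_function (R : realType) (F : R -> R) : Prop :=
  [/\ {homo F : x y / x <= y},
      (forall x, 0 <= F x <= 1),
      (F x @[x --> -oo] --> (0:R))%classic &
      (F x @[x --> +oo] --> (1:R))%classic].

Definition lim_left (R : realType) (f : R -> R) (y : R) : R :=
  lim (f x @[x --> at_left y]).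
Definition lim_right (R : realType) (f : R -> R) (y : R) : R :=
  lim (f x @[x --> at_right y]).

Definition Kfun (R : realType) (FY FZ : R -> R) : R -> R :=
  fun y => FY y + FZ y - FY y * FZ y.

Definition maxmin_gen (R : realType) (FY FZ : R -> R) (w : R) : R :=
  if w == 0 then 0 else if w == 1 then 1 else
  let K := Kfun FY FZ in
  let y0 := get [set y | lim_left K y <= w <= lim_right K y] in
  let wl := lim_left FY y0 + FZ y0 - lim_left FY y0 * FZ y0 in
  let wu := lim_right FY y0 + FZ y0 - lim_right FY y0 * FZ y0 in
  if w <= wl then lim_left FY y0
  else if w <= wu then (w - FZ y0) / (1 - FZ y0)
  else lim_right FY y0.

(* Main.v *)
Require Import Defs.
From HB Require Import structures.
From mathcomp Require Import all_boot all_order all_algebra.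
From mathcomp Require Import all_classical all_reals all_analysis.
From mathcomp Require Import ring lra.
Set Implicit Arguments. Unset Strict Implicit.
Import Order.TTheory GRing.Theory Num.Theory.
Import numFieldNormedType.Exports.
Local Open Scope ring_scope.
Local Open Scope classical_set_scope.

Section Mono.
Variable R : realType.
Implicit Types f : R -> R.

Lemma cvg_left f a : {homo f : x y / x <= y} -> cvg (f x @[x --> a^'-]).
Proof.
move=> nd; apply: nondecreasing_at_left_is_cvgr.
  by near=> x => u v _ _ uv; exact: nd.
near=> x; exists (f a) => _ [s + <-] /=; rewrite /= in_itv/= => /andP[_ /ltW sa].
exact: nd.
Unshelve. all: by end_near. Qed.

Lemma cvg_right f a : {homo f : x y / x <= y} -> cvg (f x @[x --> a^'+]).
Proof.
move=> nd; apply: nondecreasing_at_right_is_cvgr.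
  by near=> x => u v _ _ uv; exact: nd.
near=> x; exists (f a) => _ [s + <-] /=; rewrite /= in_itv/= => /andP[/ltW sa _].
exact: nd.
Unshelve. all: by end_near. Qed.

Lemma left_ub f a c : {homo f : x y / x <= y} ->
  (forall x, x < a -> f x <= c) -> lim_left f a <= c.
Proof.
move=> nd H; apply: limr_le; first exact: cvg_left.
near=> x; apply: H; near: x; exact: nbhs_left_lt.
Unshelve. all: by end_near. Qed.

Lemma left_ge f a x : {homo f : x y / x <= y} -> x < a -> f x <= lim_left f a.
Proof.
move=> nd xa; apply: limr_ge; first exact: cvg_left.
near=> y; apply: nd; apply: ltW; near: y; exact: nbhs_left_gt.
Unshelve. all: by end_near. Qed.

Lemma left_le f a : {homo f : x y / x <= y} -> lim_left f a <= f a.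
Proof.
move=> nd; apply: limr_le; first exact: cvg_left.
near=> y; apply: nd; near: y; exact: nbhs_left_le.
Unshelve. all: by end_near. Qed.

Lemma right_lb f a c : {homo f : x y / x <= y} ->
  (forall x, a < x -> c <= f x) -> c <= lim_right f a.
Proof.
move=> nd H; apply: limr_ge; first exact: cvg_right.
near=> x; apply: H; near: x; exact: nbhs_right_gt.
Unshelve. all: by end_near. Qed.

Lemma right_le f a x : {homo f : x y / x <= y} -> a < x -> lim_right f a <= f x.
Proof.
move=> nd xa; apply: limr_le; first exact: cvg_right.
near=> y; apply: nd; apply: ltW; near: y; exact: nbhs_right_lt.
Unshelve. all: by end_near. Qed.

Lemma right_ge f a : {homo f : x y / x <= y} -> f a <= lim_right f a.
Proof.
move=> nd; apply: limr_ge; first exact: cvg_right.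
near=> y; apply: nd; near: y; exact: nbhs_right_ge.
Unshelve. all: by end_near. Qed.

Lemma right_left f y z : {homo f : x y / x <= y} -> y < z ->
  lim_right f y <= lim_left f z.
Proof.
move=> nd yz; apply: (@le_trans _ _ (f ((y + z) / 2))).
  by apply: right_le => //; rewrite midf_lt.
by apply: left_ge => //; rewrite midf_lt.
Qed.

Lemma lim_left_K (FY FZ : R -> R) a : {homo FY : x y / x <= y} -> {homo FZ : x y / x <= y} ->
  lim_left (Kfun FY FZ) a = lim_left FY a + lim_left FZ a - lim_left FY a * lim_left FZ a.
Proof.
move=> h1 h2; rewrite /lim_left /Kfun; apply: cvg_lim => //.
apply: cvgB; [apply: cvgD|apply: cvgM]; exact: cvg_left.
Qed.

Lemma lim_right_K (FY FZ : R -> R) a : {homo FY : x y / x <= y} -> {homo FZ : x y / x <= y} ->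
  lim_right (Kfun FY FZ) a = lim_right FY a + lim_right FZ a - lim_right FY a * lim_right FZ a.
Proof.
move=> h1 h2; rewrite /lim_right /Kfun; apply: cvg_lim => //.
apply: cvgB; [apply: cvgD|apply: cvgM]; exact: cvg_right.
Qed.
End Mono.
Section Alg.
Variable R : realFieldType.
Definition gen (a b c w : R) :=
  if w <= a + c - a * c then a
  else if w <= b + c - b * c then (w - c) / (1 - c) else b.

Lemma mid_c (a b c w : R) : c <= 1 -> a + c - a * c < w -> w <= b + c - b * c -> c < 1.
Proof.
move=> c1 h1 h2; rewrite lt_neqAle c1 andbT; apply/negP => /eqP ec.
rewrite ec in h1 h2; lra.
Qed.

Lemma mid_t (c w : R) : c < 1 -> ((w - c) / (1 - c)) * (1 - c) = w - c.
Proof. move=> c1; rewrite divfK //; lra. Qed.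

Lemma gen_bounds a b c w : a <= b -> c <= 1 -> a <= gen a b c w <= b.
Proof.
move=> ab c1; rewrite /gen; case: ifPn => h1; first by rewrite lexx ab.
case: ifPn => h2; last by rewrite ab lexx.
rewrite -ltNge in h1.
have c1' := @mid_c a b c w c1 h1 h2.
have := @mid_t c w c1'; set t := (w - c) / (1 - c) => ht.
apply/andP; split; nra.
Qed.

Lemma gen_h a b c w hm hp : 0 <= a -> a <= b -> b <= 1 -> hm <= c -> c <= hp -> hp <= 1 ->
  w < 1 -> a + hm - a * hm <= w -> w <= b + hp - b * hp ->
  exists h, [/\ hm <= h, h <= hp & 1 - w = (1 - gen a b c w) * (1 - h)].
Proof.
move=> a0 ab b1 hmc chp hp1 w1 lo hi; rewrite /gen; case: ifPn => h1.
  have a1 : a < 1 by rewrite lt_neqAle (le_trans ab b1) andbT; apply/negP => /eqP e;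
    rewrite e in lo; lra.
  exists (1 - (1 - w) / (1 - a)); have e : (1 - w) / (1 - a) * (1 - a) = 1 - w.
    by rewrite divfK //; lra.
  set u := (1 - w) / (1 - a) in e *; split; try nra.
case: ifPn => h2.
  rewrite -ltNge in h1; have c1' := @mid_c a b c w (le_trans chp hp1) h1 h2.
  exists c; split => //; have := @mid_t c w c1'; set t := (w - c) / (1 - c); nra.
rewrite -!ltNge in h1 h2.
have b1' : b < 1 by rewrite lt_neqAle b1 andbT; apply/negP => /eqP e; rewrite e in h2; lra.
exists (1 - (1 - w) / (1 - b)); have e : (1 - w) / (1 - b) * (1 - b) = 1 - w.
  by rewrite divfK //; lra.
set u := (1 - w) / (1 - b) in e *; split; try nra.

Qed.

Lemma gen_mono a b a' b' c w : a' <= a -> b' <= b -> a' <= b' -> a <= b -> c <= 1 ->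
  w <= 1 -> gen a' b' c w <= gen a b c w.
Proof.
move=> aa bb ab' ab c1 w1; rewrite /gen.
have [ec|c1'] := eqVneq c 1.
  have e : forall x : R, x + 1 - x * 1 = 1 by move=> x; ring.
  by rewrite ec !e w1.
have c1'' : c < 1 by rewrite lt_neqAle c1' c1.
have := @mid_t c w c1''; set t := (w - c) / (1 - c) => ht.
by case: (leP w (a' + c - a' * c)); case: (leP w (b' + c - b' * c));
  case: (leP w (a + c - a * c)); case: (leP w (b + c - b * c)); nra.
Qed.
Lemma final_ineq (w g g' h h' : R) : w < 1 -> g <= 1 -> h <= h' -> h' <= 1 ->
  1 - w = (1 - g) * (1 - h) -> 1 - w = (1 - g') * (1 - h') -> g' <= g.
Proof.
move=> w1 g1 hh h'1 e e'.
have hq : h' < 1.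
  rewrite lt_neqAle h'1 andbT; apply/eqP => eh; rewrite eh subrr mulr0 in e'; lra.
rewrite leNgt; apply/negP => gg.
have p1 : 0 <= (1 - g) * (h' - h) by apply: mulr_ge0; lra.
have p2 : 0 < (g' - g) * (1 - h') by apply: mulr_gt0; lra.
have id : (1 - g) * (1 - h) - (1 - g') * (1 - h') = (1 - g) * (h' - h) + (g' - g) * (1 - h')
  by ring.
lra.
Qed.
End Alg.

Section Main.
Variable R : realType.

Lemma dist_facts (F : R -> R) y : distribution_function F ->
  [/\ 0 <= lim_left F y, lim_left F y <= F y, F y <= lim_right F y & lim_right F y <= 1].
Proof.
case=> nd b _ _; split.
- have y1 : y - 1 < y by lra.
  apply: le_trans _ (left_ge nd y1); by have /andP[] := b (y - 1).
- exact: left_le.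
- exact: right_ge.
- have y1 : y < y + 1 by lra.
  apply: le_trans (right_le nd y1) _; by have /andP[] := b (y + 1).
Qed.

Lemma lim_left_mono (f g : R -> R) a : {homo f : x y / x <= y} -> {homo g : x y / x <= y} ->
  (forall x, g x <= f x) -> lim_left g a <= lim_left f a.
Proof.
move=> nf ng h; apply: left_ub => // x xa; exact: le_trans (h x) (left_ge nf xa).
Qed.

Lemma lim_right_mono (f g : R -> R) a : {homo f : x y / x <= y} -> {homo g : x y / x <= y} ->
  (forall x, g x <= f x) -> lim_right g a <= lim_right f a.
Proof.
move=> nf ng h; apply: right_lb => // x xa; exact: le_trans (right_le ng xa) (h x).
Qed.

Lemma K_homo (FY FZ : R -> R) : distribution_function FY -> distribution_function FZ ->
  {homo Kfun FY FZ : x y / x <= y}.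
Proof.
case=> ndY bY _ _ [ndZ bZ _ _] x y xy; rewrite /Kfun.
have := ndY _ _ xy; have := ndZ _ _ xy.
have /andP[? ?] := bY x; have /andP[? ?] := bY y.
have /andP[? ?] := bZ x; have /andP[? ?] := bZ y.
nra.
Qed.

Lemma y0_exists (FY FZ : R -> R) w : distribution_function FY -> distribution_function FZ ->
  0 < w -> w < 1 ->
  exists y, lim_left (Kfun FY FZ) y <= w <= lim_right (Kfun FY FZ) y.
Proof.
move=> dY dZ w0 w1; have ndK := K_homo dY dZ.
case: dY => ndY bY limYm limYp; case: dZ => ndZ bZ limZm limZp.
have KgeY : forall x, FY x <= Kfun FY FZ x.
  move=> x; rewrite /Kfun; have /andP[? ?] := bY x; have /andP[? ?] := bZ x; nra.
have KleS : forall x, Kfun FY FZ x <= FY x + FZ x.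
  move=> x; rewrite /Kfun; have /andP[? ?] := bY x; have /andP[? ?] := bZ x; nra.
pose S := [set y | Kfun FY FZ y < w].
have w2 : 0 < w / 2 by lra.
have [x0 Sx0] : exists x, S x.
  have h1 := cvgr_lt _ limYm _ w2; have h2 := cvgr_lt _ limZm _ w2.
  have : \forall t \near -oo, FY t < w / 2 /\ FZ t < w / 2.
    by near=> t; split; near: t; [exact: h1|exact: h2].
  case/filter_ex => t [t1 t2]; exists t; rewrite /S /=.
  have := KleS t; lra.
have [M HM] : exists M, w < FY M.
  have : \forall t \near +oo, w < FY t by near=> t; near: t; exact: (cvgr_gt _ limYp _ w1).
  by case/filter_ex => t ht; exists t.
have ubS : ubound S M.
  move=> s Ss; rewrite leNgt; apply/negP => Ms.
  have := ndK _ _ (ltW Ms); have := KgeY M; move: Ss; rewrite /S /=; lra.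
have supS : has_sup S by split; [exists x0 | exists M].
exists (sup S); apply/andP; split.
  apply: left_ub => // x xs.
  have [s Ss hs] := @sup_adherent _ S (sup S - x) ltac:(lra) supS.
  have xs2 : x <= s by move: hs; rewrite opprB addrC subrK; apply: ltW.
  have := ndK x s xs2; move: Ss; rewrite /S /=; lra.
apply: right_lb => // x xs; rewrite leNgt; apply/negP => Kx.
have := sup_upper_bound supS Kx; lra.
Unshelve. all: by end_near. Qed.

Lemma maxmin_genE (FY FZ : R -> R) w : w != 0 -> w != 1 ->
  maxmin_gen FY FZ w =
  let y0 := get [set y | lim_left (Kfun FY FZ) y <= w <= lim_right (Kfun FY FZ) y] in
  gen (lim_left FY y0) (lim_right FY y0) (FZ y0) w.
Proof. by move=> h0 h1; rewrite /maxmin_gen (negbTE h0) (negbTE h1). Qed.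

Lemma chi_spec (FY FZ : R -> R) w y0 : distribution_function FY -> distribution_function FZ ->
  0 < w -> w < 1 -> lim_left (Kfun FY FZ) y0 <= w <= lim_right (Kfun FY FZ) y0 ->
  let g := gen (lim_left FY y0) (lim_right FY y0) (FZ y0) w in
  [/\ lim_left FY y0 <= g, g <= lim_right FY y0 &
   exists h, [/\ lim_left FZ y0 <= h, h <= lim_right FZ y0 & 1 - w = (1 - g) * (1 - h)]].
Proof.
move=> dY dZ w0 w1 /andP[lo hi] g.
have [a0 aY Yb b1] := dist_facts y0 dY.
have [hm0 hmc chp hp1] := dist_facts y0 dZ.
case: (dY) => ndY _ _ _; case: (dZ) => ndZ _ _ _.
rewrite lim_left_K // in lo; rewrite lim_right_K // in hi.
have ab := le_trans aY Yb.
have /andP[g1 g2] := gen_bounds (c:=FZ y0) w ab (le_trans chp hp1).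
split => //.
by apply: gen_h.
Qed.

End Main.

Theorem lemma2 (R : realType) (FY' FY FZ : R -> R) :
  distribution_function FY' -> distribution_function FY ->
  distribution_function FZ ->
  (forall y, FY' y <= FY y) ->
  forall w : R, 0 <= w <= 1 -> maxmin_gen FY' FZ w <= maxmin_gen FY FZ w.
Proof.
move=> dY' dY dZ hle w /andP[w0 w1].
have [->|w0'] := eqVneq w 0; first by rewrite /maxmin_gen eqxx.
have [->|w1'] := eqVneq w 1; first by rewrite /maxmin_gen oner_eq0 eqxx.
have w0s : 0 < w by rewrite lt_neqAle eq_sym w0' w0.
have w1s : w < 1 by rewrite lt_neqAle w1' w1.
rewrite !maxmin_genE //=.
set y0' := get _; set y0 := get _.
have P' : lim_left (Kfun FY' FZ) y0' <= w <= lim_right (Kfun FY' FZ) y0'.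
  exact: (getPex (y0_exists dY' dZ w0s w1s)).
have P : lim_left (Kfun FY FZ) y0 <= w <= lim_right (Kfun FY FZ) y0.
  exact: (getPex (y0_exists dY dZ w0s w1s)).
have [ga1' ga2' [h' [h1' h2' e']]] := chi_spec dY' dZ w0s w1s P'.
have [ga1 ga2 [h [h1 h2 e]]] := chi_spec dY dZ w0s w1s P.
case: (dY') => ndY' _ _ _; case: (dY) => ndY _ _ _; case: (dZ) => ndZ _ _ _.
set g' := gen _ _ _ w in ga1' ga2' e' *; set g := gen _ _ _ w in ga1 ga2 e *.
case: (ltgtP y0' y0) => yy.
- apply: le_trans ga2' _; apply: le_trans (lim_right_mono y0' ndY ndY' hle) _.
  exact: le_trans (right_left ndY yy) ga1.
- have := right_left ndZ yy.
  have [_ _ _ b1] := dist_facts y0 dY; have [_ _ _ hp1] := dist_facts y0' dZ.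
  have [_ _ _ b1'] := dist_facts y0' dY'.
  have g1 : g <= 1 := le_trans ga2 b1.
  have g1' : g' <= 1 := le_trans ga2' b1'.
  move=> hr; apply: (final_ineq w1s g1 _ _ e e').
    exact: le_trans h2 (le_trans hr h1').
  exact: le_trans h2' hp1.
- rewrite /g' /g yy.
  have [a0 aY Yb b1] := dist_facts y0 dY.
  have [a0' aY' Yb' b1'] := dist_facts y0 dY'.
  have [_ _ cZ c1] := dist_facts y0 dZ.
  apply: gen_mono.
  + exact: lim_left_mono.
  + exact: lim_right_mono.
  + exact: le_trans aY' Yb'.
  + exact: le_trans aY Yb.
  + have /andP[_ ] := (let: And4 _ b _ _ := dZ in b) y0; done.
  + exact: w1.
Qed.
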